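(* Let $G$ be a graph on $n$ vertices without isolated vertices. For every $n-i\gamma(G)$ covers $W_1,\dots,W_{n-i\gamma(G)}$ of $G$, there is a cover $W$ of $G$ of the form $W=\{w_{i_1},\dots,w_{i_k}\}$ with $1\le i_1<\dots<i_k\le n-i\gamma(G)$ and $w_{i_j}\in W_{i_j}$ for each $j\in[k]$.
   Context: A cover of $G$ is a set $W\subseteq V(G)$ containing at least one endpoint of every edge. $\gamma(G;A)$ is the minimum size of a set $D$ such that every vertex of $A$ has a neighbor in $D$; $i\gamma(G)=\max\{\gamma(G;I): I\text{ an independent set of }G\}$. *)

(* Defs.v *)
(* A simple graph on a finite vertex type T is a symmetric,
   irreflexive boolean relation e : rel T; V(G) = T, n = #|T|. *)
From mathcomp Require Import all_boot.
Set Implicit Arguments. Unset Strict Implicit. Unset Printing Implicit Defensive.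

Definition simple_graph (T : finType) (e : rel T) : Prop :=
  symmetric e /\ irreflexive e.

Definition no_isolated (T : finType) (e : rel T) : Prop :=
  forall x : T, exists y : T, e x y.

Definition is_cover (T : finType) (e : rel T) (W : {set T}) : Prop :=
  forall x y : T, e x y -> (x \in W) || (y \in W).

Definition independent (T : finType) (e : rel T) (I : {set T}) : bool :=
  [forall x in I, forall y in I, ~~ e x y].

Definition dominates_nb (T : finType) (e : rel T) (A D : {set T}) : bool :=
  [forall a in A, exists d in D, e a d].

(* The default #|T| is harmless: whenever some D works, #|D| <= #|T|; when G has
   no isolated vertices, D = [set: T] always works. *)
Definition gammaA (T : finType) (e : rel T) (A : {set T}) : nat :=
  \big[minn/#|T|]_(D : {set T} | dominates_nb e A D) #|D|.

Definition igamma (T : finType) (e : rel T) : nat :=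
  \max_(I : {set T} | independent e I) gammaA e I.

(* Main.v *)
Require Import Defs.
From mathcomp Require Import all_boot.
From mathcomp Require Import zify.

Set Implicit Arguments. Unset Strict Implicit. Unset Printing Implicit Defensive.

Lemma ar1 (c d : nat) (b : bool) : c <= b + d -> c.-1 <= d.
Proof. case: b => /=; lia. Qed.
Lemma ar2 v s c v' s' : v <= s + c -> s = 1 + s' -> v' < v -> v' <= s' + c.
Proof. lia. Qed.
Lemma ar3 v s c v' s' : v <= s + c -> s = 1 + s' -> v' <= v - 2 -> v' <= s' + c.-1.
Proof. lia. Qed.
Lemma ar4 v i s c : c <= v - i -> i <= v -> v <= s + c -> i <= s.
Proof. lia. Qed.
Lemma ar5 v' v n : v' < v -> v <= n.+1 -> v' <= n.
Proof. lia. Qed.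

Lemma bigmin_le (I : finType) (P : pred I) (F : I -> nat) x i0 :
  P i0 -> \big[minn/x]_(i | P i) F i <= F i0.
Proof.
move=> Pi0; rewrite -big_filter.
have : i0 \in [seq i <- index_enum I | P i] by rewrite mem_filter Pi0 mem_index_enum.
elim: [seq i <- index_enum I | P i] => //= j r IH; rewrite inE big_cons => /orP [/eqP -> | /IH H].
  exact: geq_minl.
exact: leq_trans (geq_minr _ _) H.
Qed.

Section Main.
Variables (T : finType) (e : rel T).
Hypothesis Hsym : symmetric e.
Hypothesis Hirr : irreflexive e.

Lemma indepP (I : {set T}) x y :
  independent e I -> x \in I -> y \in I -> ~~ e x y.
Proof.
move=> /forall_inP H xI yI; move: (H x xI) => /forall_inP H2; exact: H2.
Qed.

Lemma rainbow_inj (K : finType) (x0 : T) : forall n (A : {set T}) (S0 : {set K}),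
  #|A| <= n -> #|A| <= #|S0| ->
  exists (S : {set K}) (w : K -> T), S \subset S0 /\ (forall i, i \in S -> w i \in A) /\
    A \subset [set w i | i in S].
Proof.
elim=> [|n IH] A S0 HA HS.
  exists (set0 : {set K}), (fun _ => x0); split; first exact: sub0set.
  split; first by move=> i; rewrite inE.
  have -> : A = set0 by apply/eqP; rewrite -cards_eq0; lia.
  exact: sub0set.
case: (set_0Vmem A) => [-> | [a aA]].
  exists (set0 : {set K}), (fun _ => x0); split; first exact: sub0set.
  by split; [move=> i; rewrite inE | exact: sub0set].
have : 0 < #|S0| by rewrite (cardsD1 a) aA in HA HS; lia.
case/card_gt0P => i0 i0S.
have HA' : #|A :\ a| <= n by rewrite (cardsD1 a) aA in HA; lia.
have HS' : #|A :\ a| <= #|S0 :\ i0|.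
  by rewrite (cardsD1 a) aA in HS; rewrite (cardsD1 i0 S0) i0S in HS; rewrite (cardsD1 a A) aA in HA; lia.
have [S [w [HSs [Hw Hsub]]]] := IH _ _ HA' HS'.
exists (i0 |: S), (fun i => if i == i0 then a else w i); split.
  apply/subsetP => i; rewrite !inE => /orP [/eqP -> //|iS].
  by move/subsetP: HSs => /(_ i iS); rewrite !inE => /andP [].
split.
  move=> i; rewrite !inE; case: eqP => [_ _|_ /= iS] //.
  by move: (Hw i iS); rewrite !inE => /andP [].
apply/subsetP => x xA; case: (x =P a) => [->|xa].
  by apply/imsetP; exists i0; rewrite ?inE ?eqxx.
have : x \in A :\ a by rewrite !inE xA andbT; apply/eqP.
move/(subsetP Hsub) => /imsetP [i iS ->].
apply/imsetP; exists i; first by rewrite inE iS orbT.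
case: eqP => // ei; move/subsetP: HSs => /(_ i iS); by rewrite ei !inE eqxx.
Qed.

Lemma main (K : finType) (W : K -> {set T}) (x0 : T) : forall n (V I : {set T}) (S0 : {set K}) (c : nat),
  #|V| <= n ->
  (forall x, x \in V -> exists2 y, y \in V & e x y) ->
  I \subset V -> independent e I ->
  (forall D : {set T}, dominates_nb e I D -> c <= #|D|) ->
  #|V| <= #|S0| + c ->
  (forall i, i \in S0 -> forall x y, x \in V -> y \in V -> e x y -> (x \in W i) || (y \in W i)) ->
  exists (S : {set K}) (w : K -> T), S \subset S0 /\ (forall i, i \in S -> w i \in W i) /\
   (forall x y, x \in V -> y \in V -> e x y ->
      (x \in [set w i | i in S]) || (y \in [set w i | i in S])).
Proof.
elim=> [|n IH] V I S0 c HV Hiso HIV HI Hc Hsz Hcov.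
  exists (set0 : {set K}), (fun _ => x0); split; first exact: sub0set.
  split; first by move=> i; rewrite inE.
  move=> x y xV; have : #|V| == 0 by lia.
  by rewrite cards_eq0 => /eqP V0; rewrite V0 inE in xV.
case: (pickP (fun p : K * T => [&& p.1 \in S0, p.2 \in W p.1, p.2 \in V & p.2 \notin I])).
  move=> [i0 w] /= /and4P [i0S wW wV wI].
  set V' := [set x in V | (x != w) && [exists y in V, (y != w) && e x y]].
  set I' := I :&: V'.
  set c' := if I \subset V' then c else c.-1.
  have V'V : V' \subset V by apply/subsetP => x; rewrite inE => /andP [].
  have wV' : w \notin V' by rewrite inE eqxx andbF.
  have HV' : #|V'| < #|V|.
    apply: proper_card; apply/properP; split => //; by exists w.
  have Hiso' : forall x, x \in V' -> exists2 y, y \in V' & e x y.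
    move=> x; rewrite inE => /andP [xV /andP [xw /exists_inP [y yV /andP [yw exy]]]].
    exists y => //; rewrite inE yV yw /=; apply/exists_inP; exists x => //.
    by rewrite xw Hsym.
  have HI' : independent e I'.
    apply/forall_inP => x; rewrite inE => /andP [xI _]; apply/forall_inP => y.
    rewrite inE => /andP [yI _]; exact: indepP HI xI yI.
  have HIV' : I' \subset V' by apply: subsetIr.
  have Hc' : forall D : {set T}, dominates_nb e I' D -> c' <= #|D|.
    move=> D HD; rewrite /c'; case: ifP => HIs.
      apply: Hc; apply/forall_inP => a aI; move/forall_inP: HD; apply.
      by rewrite inE aI (subsetP HIs).
    have : c <= #|w |: D|.
      apply: Hc; apply/forall_inP => a aI.
      case aV' : (a \in V').
        move/forall_inP: HD => /(_ a); rewrite inE aI aV' => /(_ isT) /exists_inP [d dD ead].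
        by apply/exists_inP; exists d; rewrite // inE dD orbT.
      have aV := subsetP HIV a aI.
      have aw : a != w by apply/eqP => aw; rewrite -aw aI in wI.
      have [y yV eay] := Hiso a aV.
      apply/exists_inP; exists w; first by rewrite !inE eqxx.
      case: (y =P w) => [<- // | /eqP yw].
      by move: aV'; rewrite inE aV aw /=; move/negbT/negP; case; apply/exists_inP; exists y; rewrite ?yw.
    rewrite cardsU1; exact: ar1.
  have Hsz' : #|V'| <= #|S0 :\ i0| + c'.
    have HS1 := cardsD1 i0 S0; rewrite i0S /= in HS1.
    rewrite /c'; case: ifP => HIs; first exact: ar2 Hsz HS1 HV'.
    have [a aI aV'] : exists2 a, a \in I & a \notin V'.
      by move/negbT: HIs => /subsetPn.
    have aw : a != w by apply/eqP => aw; rewrite -aw aI in wI.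
    have : V' \subset V :\: [set w; a].
      apply/subsetP => x xV'; rewrite !inE (subsetP V'V _ xV') andbT negb_or.
      apply/andP; split; apply/eqP => E; [by move: xV'; rewrite E (negbTE wV') | by move: xV'; rewrite E (negbTE aV')].
    move/subset_leq_card; rewrite cardsD.
    have -> : #|V :&: [set w; a]| = 2.
      rewrite (setIidPr _) ?cards2; first by rewrite eq_sym aw.
      apply/subsetP => x; rewrite !inE => /orP [] /eqP ->; [exact: wV | exact: (subsetP HIV _ aI)].
    exact: ar3 Hsz HS1.
  have Hcov' : forall i, i \in S0 :\ i0 -> forall x y, x \in V' -> y \in V' -> e x y ->
      (x \in W i) || (y \in W i).
    move=> i; rewrite inE => /andP [_ iS] x y xV yV; apply: Hcov => //; exact: (subsetP V'V).
  have [|S [w' [HSs [Hw Hcv]]]] := IH V' I' (S0 :\ i0) c' _ Hiso' HIV' HI' Hc' Hsz' Hcov'.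
    exact: ar5 HV' HV.
  exists (i0 |: S), (fun i => if i == i0 then w else w' i); split.
    apply/subsetP => i; rewrite !inE => /orP [/eqP -> //|iS].
    by move/subsetP: HSs => /(_ i iS); rewrite !inE => /andP [].
  split.
    move=> i; rewrite !inE; case: eqP => [-> //| _ /= iS]; exact: Hw.
  have inw : w \in [set (if i == i0 then w else w' i) | i in i0 |: S].
    by apply/imsetP; exists i0; rewrite ?inE ?eqxx.
  have lift : forall z, z \in [set w' i | i in S] ->
      z \in [set (if i == i0 then w else w' i) | i in i0 |: S].
    move=> z /imsetP [i iS ->]; apply/imsetP; exists i; first by rewrite inE iS orbT.
    case: eqP => // ei; move/subsetP: HSs => /(_ i iS); by rewrite ei !inE eqxx.
  move=> x y xV yV exy.
  case: (x =P w) => [-> | /eqP xw]; first by rewrite inw.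
  case: (y =P w) => [-> | /eqP yw]; first by rewrite inw orbT.
  have xV' : x \in V' by rewrite inE xV xw /=; apply/exists_inP; exists y; rewrite ?yw.
  have yV' : y \in V' by rewrite inE yV yw /=; apply/exists_inP; exists x; rewrite ?xw // Hsym.
  by case/orP: (Hcv x y xV' yV' exy) => /lift ->; rewrite ?orbT.
move=> Hno.
have HinI : forall i z, i \in S0 -> z \in W i -> z \in V -> z \in I.
  move=> i z iS zW zV; move: (Hno (i, z)) => /=; rewrite iS zW zV /=; by case: (z \in I).
have IW : forall i, i \in S0 -> I \subset W i.
  move=> i iS; apply/subsetP => a aI; have aV := subsetP HIV a aI.
  have [y yV eay] := Hiso a aV.
  case/orP: (Hcov i iS a y aV yV eay) => // yW.
  by move: (indepP HI aI (HinI i y iS yW yV)); rewrite eay.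
have cle : c <= #|V| - #|I|.
  have -> : #|V| - #|I| = #|V :\: I|.
    by rewrite cardsD (setIidPr HIV).
  apply: Hc; apply/forall_inP => a aI; have aV := subsetP HIV a aI.
  have [y yV eay] := Hiso a aV.
  apply/exists_inP; exists y => //; rewrite inE yV andbT; apply/negP => yI.
  by move: (indepP HI aI yI); rewrite eay.
have HIle : #|I| <= #|V| by apply: subset_leq_card.
have HIS : #|I| <= #|S0| by exact: ar4 cle HIle Hsz.
have [S [w [HSs [Hw Hsub]]]] := rainbow_inj x0 (leqnn #|I|) HIS.
exists S, w; split => //; split.
  move=> i iS; exact: (subsetP (IW i (subsetP HSs i iS))) (Hw i iS).
move=> x y xV yV exy.
have : (x \in I) || (y \in I).
  case: (set_0Vmem S0) => [S00 | [i iS]].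
    have c0 : c <= 0 by rewrite -(cards0 T); apply: Hc; apply/forall_inP => a aI;
      rewrite S00 cards0 in HIS; move: HIS; rewrite leqn0 cards_eq0 => /eqP I0; by rewrite I0 inE in aI.
    have : #|V| == 0 by rewrite S00 cards0 in Hsz; rewrite -leqn0 (leq_trans Hsz c0).
    by rewrite cards_eq0 => /eqP V0; rewrite V0 inE in xV.
  case/orP: (Hcov i iS x y xV yV exy) => zW.
    by rewrite (HinI i x iS zW xV).
  by rewrite (HinI i y iS zW yV) orbT.
by case/orP => /(subsetP Hsub) ->; rewrite ?orbT.
Qed.

End Main.

Theorem corollary3p3 (T : finType) (e : rel T)
  (Hg : simple_graph e) (Hiso : no_isolated e)
  (Ws : 'I_(#|T| - igamma e) -> {set T})
  (Hcov : forall i, is_cover e (Ws i)) :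
  exists (S : {set 'I_(#|T| - igamma e)}) (w : 'I_(#|T| - igamma e) -> T),
    (forall i, i \in S -> w i \in Ws i) /\ is_cover e [set w i | i in S].
Proof.
case: Hg => Hsym Hirr.
case: (pickP (fun _ : T => true)) => [x0 _ | T0]; last first.
  have F : 'I_(#|T| - igamma e) -> T.
    move=> [i Hi]; exfalso; move: Hi; by rewrite eq_card0.
  exists set0, F; split; first by move=> i; rewrite inE.
  move=> x; by move: (T0 x).
have i0 : independent e set0 by apply/forall_inP => x; rewrite inE.
set I := [arg max_(i > set0 | independent e i) gammaA e i].
have HI : independent e I by rewrite /I; case: arg_maxnP.
have Hig : igamma e = gammaA e I by rewrite /igamma (bigmax_eq_arg set0).
have Hc : forall D : {set T}, dominates_nb e I D -> gammaA e I <= #|D|.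
  move=> D HD; exact: bigmin_le.
have Hiso' : forall x, x \in [set: T] -> exists2 y, y \in [set: T] & e x y.
  by move=> x _; case: (Hiso x) => y exy; exists y; rewrite ?inE.
have cle : gammaA e I <= #|T|.
  apply: leq_trans (Hc setT _) _; last by rewrite cardsT.
  apply/forall_inP => a _; case: (Hiso a) => y eay; apply/exists_inP; by exists y; rewrite ?inE.
have Hsz : #|[set: T]| <= #|[set: 'I_(#|T| - igamma e)]| + gammaA e I.
  rewrite !cardsT card_ord Hig; lia.
have [S [w [_ [Hw Hcv]]]] := main Hsym x0 (leqnn _) Hiso' (subsetT I) HI Hc Hsz
   (fun i _ x y _ _ exy => Hcov i x y exy).
exists S, w; split => // x y exy; apply: Hcv; rewrite ?inE //.
Qed.
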